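(* Let $F$, $H$, $X$, $\Omega$, $Q$ and the sequences generated by the IneIREG method be as described in the context, and suppose $H$ is $\mu$-strongly monotone for some $\mu>0$. Suppose $\eta_k\equiv\eta>0$; $\lambda_k\in[\underline\lambda,\overline\lambda]$ for all $k\ge0$ with $0<\underline\lambda\le\overline\lambda<1/L$, $L:=L_F+\eta L_H$; and $\alpha_0\in[0,1]$ and $\alpha_{k+1}\le(1-\beta_k)\alpha_k$ for all $k\ge0$, where $\beta_k:=\big(\frac{1}{1-\lambda_k^2L^2}+\frac{1}{2\lambda_k\eta\mu}\big)^{-1}$. Define $p_k:=\big(\prod_{i=0}^k(1-\beta_i)\big)^{-1}$ for $k\ge0$, and for $k\ge1$ $\Lambda_k:=\sum_{j=0}^{k-1}\lambda_j\eta p_j$ and $\overline y_k:=\Lambda_k^{-1}\sum_{j=0}^{k-1}\lambda_j\eta p_jy_j$. Let $\varepsilon>0$ and $k\ge1$. If $$k\ge\Big\lceil\Big(\frac{1}{1-\overline\lambda^2L^2}+\frac{1}{2\underline\lambda\eta\mu}\Big)\log\Big(\frac{(k+1)D_X^2}{\underline\lambda\eta\varepsilon}\Big)\Big\rceil,$$ then $-B_H\,\mathrm{dist}(\overline y_k,Q)\le\mathrm{Gap}(\overline y_k,H,Q)\le\varepsilon$.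
   Context: Work in $\mathbb{R}^n$ with Euclidean inner product $\langle\cdot,\cdot\rangle$ and norm $\|\cdot\|$; $\log$ is the natural logarithm. The maps $F\colon \mathrm{Dom}\,F\to\mathbb{R}^n$ and $H\colon\mathrm{Dom}\,H\to\mathbb{R}^n$ are monotone and Lipschitz continuous with constants $L_F>0$ and $L_H>0$; $H$ is $\mu$-strongly monotone means $\langle H(x)-H(y),x-y\rangle\ge\mu\|x-y\|^2$ for all $x,y\in\mathrm{Dom}\,H$. $X$ is a nonempty compact convex set and $\Omega$ a nonempty closed convex set with $X\subset\Omega\subset\mathrm{Dom}\,F\cap\mathrm{Dom}\,H$; $P_X,P_\Omega$ denote orthogonal projections. $Q:=\{x\in X:\langle F(x),y-x\rangle\ge0\ \forall y\in X\}$ is assumed nonempty. $D_X:=\sup_{x,y\in X}\|x-y\|$, $B_H:=\sup_{x\in Q}\|H(x)\|$, $\mathrm{dist}(y,Q)$ is the Euclidean distance to $Q$. $\mathrm{Gap}(z,H,Q):=\sup_{x\in Q}\langle H(x),z-x\rangle$. IneIREG method: start with $x_0=x_{-1}\in X$; for $k=0,1,\dots$, with parameters $\alpha_k\ge0$, $\lambda_k>0$, $\eta_k>0$, set $w_k=x_k+\alpha_k(x_k-x_{k-1})$, $w'_k=P_\Omega(w_k)$, $y_k=P_X\big(w_k-\lambda_k(F(w'_k)+\eta_kH(w'_k))\big)$, $x_{k+1}=P_X\big(w_k-\lambda_k(F(y_k)+\eta_kH(y_k))\big)$. *)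

(* Defs.v *)
From mathcomp Require Import all_boot all_order all_algebra.
From mathcomp Require Import all_classical all_reals all_analysis.
Import numFieldNormedType.Exports.
Set Implicit Arguments. Unset Strict Implicit. Unset Printing Implicit Defensive.
Import Order.TTheory GRing.Theory Num.Theory.
Local Open Scope classical_set_scope.
Local Open Scope ring_scope.

Section Defs.
Variables (R : realType) (n : nat).
Notation vec := 'rV[R]_n.

Definition dotp (u v : vec) : R := \sum_(i < n) u 0 i * v 0 i.
Definition enorm (u : vec) : R := Num.sqrt (dotp u u).

Definition convex_setRn (A : set vec) : Prop :=
  forall x y (t : R), A x -> A y -> 0 <= t -> t <= 1 -> A (t *: x + (1 - t) *: y).

Definition is_proj (A : set vec) (x p : vec) : Prop :=
  A p /\ forall y, A y -> enorm (x - p) <= enorm (x - y).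

Definition monotoneRn (D : set vec) (F : vec -> vec) : Prop :=
  forall x y, D x -> D y -> 0 <= dotp (F x - F y) (x - y).
Definition strongly_monotoneRn (D : set vec) (F : vec -> vec) (mu : R) : Prop :=
  forall x y, D x -> D y -> mu * enorm (x - y) ^+ 2 <= dotp (F x - F y) (x - y).
Definition lipschitzRn (D : set vec) (F : vec -> vec) (L : R) : Prop :=
  forall x y, D x -> D y -> enorm (F x - F y) <= L * enorm (x - y).

Definition VIsol (F : vec -> vec) (X : set vec) : set vec :=
  [set x | X x /\ forall y, X y -> 0 <= dotp (F x) (y - x)].

Definition diamRn (X : set vec) : R :=
  sup [set r | exists x y, X x /\ X y /\ r = enorm (x - y)].
Definition supnorm (H : vec -> vec) (Q : set vec) : R :=
  sup [set r | exists x, Q x /\ r = enorm (H x)].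
Definition distRn (y : vec) (Q : set vec) : R :=
  inf [set r | exists x, Q x /\ r = enorm (y - x)].
Definition Gap (z : vec) (H : vec -> vec) (Q : set vec) : R :=
  sup [set r | exists x, Q x /\ r = dotp (H x) (z - x)].

(* x k = x_k for k >= 0; x_{-1} := x_0 *)
Definition xprev (x : nat -> vec) (k : nat) : vec :=
  if k is k'.+1 then x k' else x 0%N.

Definition IneIREG (F H : vec -> vec) (X Omega : set vec)
  (alpha lam eta : nat -> R) (x w w' y : nat -> vec) : Prop :=
  X (x 0%N) /\
  forall k : nat,
    w k = x k + alpha k *: (x k - xprev x k) /\
    is_proj Omega (w k) (w' k) /\
    is_proj X (w k - lam k *: (F (w' k) + eta k *: H (w' k))) (y k) /\
    is_proj X (w k - lam k *: (F (y k) + eta k *: H (y k))) (x k.+1).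

End Defs.

(* Main.v *)
Require Import Defs.
From mathcomp Require Import all_boot all_order all_algebra.
From mathcomp Require Import all_classical all_reals all_analysis.
From mathcomp Require Import ring lra.
Import numFieldNormedType.Exports.
Import Order.TTheory GRing.Theory Num.Theory.
Local Open Scope classical_set_scope.
Local Open Scope ring_scope.

Ltac dring := apply/eqP; rewrite -subr_eq0; apply/eqP;
  rewrite /dotp; repeat (rewrite mulr_sumr || rewrite -sumrN || rewrite -big_split);
  apply: big1 => i _ /=; rewrite ?mxE /=; ring.


Section S.
Context {R : realType} {n : nat}.
Notation vec := 'rV[R]_n.
Implicit Types u v z : vec.
Local Notation N u := (dotp u u).

Lemma dotp_ge0 u : 0 <= dotp u u.
Proof. by apply: sumr_ge0 => i _; rewrite -expr2 sqr_ge0. Qed.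

Lemma enorm_ge0 u : 0 <= enorm u.
Proof. exact: sqrtr_ge0. Qed.

Lemma enorm_sq u : enorm u ^+ 2 = dotp u u.
Proof. by rewrite /enorm sqr_sqrtr // dotp_ge0. Qed.

Lemma test u v (a : R) : N (u - a *: v) = N u - 2 * a * dotp u v + a ^+ 2 * N v.
Proof. dring. Qed.

Lemma CS u v : dotp u v ^+ 2 <= dotp u u * dotp v v.
Proof.
set a := dotp u u; set b := dotp u v; set c := dotp v v.
have key : forall s t : R, 0 <= s^+2 * a - 2 * s * t * b + t ^+2 * c.
  move=> s t; have := dotp_ge0 (s *: u - t *: v).
  have -> : dotp (s *: u - t *: v) (s *: u - t *: v) = s^+2 * a - 2 * s * t * b + t ^+2 * c.
    rewrite /a /b /c; dring.
  by [].
have ha : 0 <= a by apply: dotp_ge0.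
have hc : 0 <= c by apply: dotp_ge0.
have [c0|cpos] := eqVneq c 0.
  have [a0|apos] := eqVneq a 0.
    have := key b 1; rewrite a0 c0; nra.
  have := key b a; rewrite c0; have : 0 < a by rewrite lt0r apos. nra.
have : 0 < c by rewrite lt0r cpos.
move=> cp; have := key c b; nra.
Qed.

Lemma CS2 u v : `|dotp u v| <= enorm u * enorm v.
Proof.
rewrite -(ger0_norm (mulr_ge0 (enorm_ge0 u) (enorm_ge0 v))).
rewrite -ler_sqr ?normr_ge0 // !real_normK ?num_real // exprMn !enorm_sq; exact: CS.
Qed.

Lemma CS3 u v : dotp u v <= enorm u * enorm v.
Proof. by have := CS2 u v; rewrite ler_norml => /andP[]. Qed.

Lemma CS4 u v : - (enorm u * enorm v) <= dotp u v.
Proof. by have := CS2 u v; rewrite ler_norml => /andP[]. Qed.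

Lemma enorm_le_of_sq u (m : R) : 0 <= m -> N u <= m ^+ 2 -> enorm u <= m.
Proof. by move=> m0 h; rewrite /enorm -(ger0_norm m0) -sqrtr_sqr ler_sqrt // sqr_ge0. Qed.

Lemma enorm_le_sq u v : enorm u <= enorm v -> N u <= N v.
Proof. move=> h; rewrite -!enorm_sq; have := enorm_ge0 u; nra. Qed.

Lemma sq_le_enorm u v : N u <= N v -> enorm u <= enorm v.
Proof. by move=> h; rewrite /enorm ler_sqrt // dotp_ge0. Qed.

Lemma enorm_triangle u v : enorm (u + v) <= enorm u + enorm v.
Proof.
have h : N (u + v) = N u + 2 * dotp u v + N v by dring.
have := CS3 u v; have := enorm_ge0 u; have := enorm_ge0 v.
move=> h1 h2 h3; apply: enorm_le_of_sq; first lra.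
rewrite h -!enorm_sq; nra.
Qed.

Lemma enormZ (a : R) u : 0 <= a -> enorm (a *: u) = a * enorm u.
Proof.
move=> a0; rewrite /enorm (_ : dotp _ _ = a ^+ 2 * N u); last by dring.
by rewrite sqrtrM ?sqr_ge0 // sqrtr_sqr ger0_norm.
Qed.

Lemma enormN u : enorm (- u) = enorm u.
Proof. by rewrite /enorm (_ : dotp _ _ = N u) //; dring. Qed.

Lemma enormB u v : enorm (u - v) = enorm (v - u).
Proof. by rewrite -enormN opprB. Qed.

Lemma proj_VI {A : set vec} {z p q} : convex_setRn A -> is_proj A z p -> A q ->
  dotp (z - p) (q - p) <= 0.
Proof.
move=> cA [Ap pmin] Aq.
set c := dotp (z - p) (q - p); set d := N (q - p).
have key : forall t : R, 0 <= t -> t <= 1 -> 2 * t * c <= t ^+ 2 * d.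
  move=> t t0 t1; have := pmin _ (cA _ _ t Aq Ap t0 t1) => /enorm_le_sq.
  have -> : N (z - (t *: q + (1 - t) *: p)) = N (z - p) - 2 * t * c + t ^+ 2 * d.
    rewrite /c /d; dring.
  lra.
rewrite leNgt; apply/negP => cpos.
have d0 : 0 <= d by apply: dotp_ge0.
have := key (c / (c + d)).
have cd : 0 < c + d by lra.
set t := c / (c + d).
have tcd : t * (c + d) = c by rewrite /t mulfVK // gt_eqF.
have t0 : 0 < t by rewrite divr_gt0.
have t1 : t <= 1 by rewrite ler_pdivrMr // mul1r; lra.
move=> /(_ (ltW t0) t1); nra.
Qed.

Lemma proj_nonexp {A : set vec} {z p q} : convex_setRn A -> is_proj A z p -> A q ->
  N (p - q) <= N (z - q).
Proof.
move=> cA hp Aq; have := proj_VI cA hp Aq.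
have -> : N (z - q) = N (z - p) + N (p - q) - 2 * dotp (z - p) (q - p) by dring.
have := dotp_ge0 (z - p); lra.
Qed.

Lemma comb_ineq (c1 c2 : R) u v : 0 < c1 -> 0 < c2 ->
  (c1^-1 + c2^-1)^-1 * N (u + v) <= c1 * N u + c2 * N v.
Proof.
move=> h1 h2.
have -> : (c1^-1 + c2^-1)^-1 = c1 * c2 / (c1 + c2).
  by field; rewrite ?gt_eqF // ?addr_gt0.
have hs : 0 < c1 + c2 by rewrite addr_gt0.
rewrite mulrAC ler_pdivrMr // -subr_ge0.
have -> : (c1 * N u + c2 * N v) * (c1 + c2) - c1 * c2 * N (u + v) = N (c1 *: u - c2 *: v).
  rewrite (_ : (c1 * N u + c2 * N v) * (c1 + c2) = c1 * (c1 + c2) * N u + c2 * (c1 + c2) * N v); last by ring.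
  by dring.
exact: dotp_ge0.
Qed.
End S.


Section S3.
Variables (R : realType) (n : nat).
Notation vec := 'rV[R]_n.
Local Notation N u := (dotp u u).

Lemma eg_step (X Omega DomF DomH : set vec) (F H : vec -> vec) (LF LH eta mu lam : R)
  (w w' yk xk1 x : vec) :
  convex_setRn X -> convex_setRn Omega -> X `<=` Omega -> Omega `<=` DomF `&` DomH ->
  monotoneRn DomF F -> lipschitzRn DomF F LF -> strongly_monotoneRn DomH H mu ->
  lipschitzRn DomH H LH ->
  0 <= LF -> 0 <= LH -> 0 < eta -> 0 < mu -> 0 < lam -> lam * (LF + eta * LH) < 1 ->
  is_proj Omega w w' ->
  is_proj X (w - lam *: (F w' + eta *: H w')) yk ->
  is_proj X (w - lam *: (F yk + eta *: H yk)) xk1 ->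
  VIsol F X x ->
  N (xk1 - x) <= (1 - ((1 - lam ^+ 2 * (LF + eta * LH) ^+ 2)^-1 + (2 * lam * eta * mu)^-1)^-1)
      * N (w - x) - 2 * lam * eta * dotp (H x) (yk - x).
Proof.
move=> cX cO XO OD monF lipF smH lipH LF0 LH0 eta0 mu0 lam0 lamL hw hy hx1 [Xx solx].
set L := LF + eta * LH.
have L0 : 0 <= L by rewrite /L addr_ge0 // mulr_ge0 // ltW.
set gw := F w' + eta *: H w'; set gy := F yk + eta *: H yk.
have Xy : X yk by case: hy.
have Xx1 : X xk1 by case: hx1.
have Ow' : Omega w' by case: hw.
have VI1 := proj_VI cX hy Xx1.
have VI2 := proj_VI cX hx1 Xx.
have iden : N (xk1 - x) = N (w - x) - N (w - yk) - N (yk - xk1)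
   + 2 * lam * dotp (gw - gy) (xk1 - yk) - 2 * lam * dotp gy (yk - x)
   + 2 * dotp (w - lam *: gw - yk) (xk1 - yk) + 2 * dotp (w - lam *: gy - xk1) (x - xk1).
  dring.
have hA : 2 * lam * dotp (gw - gy) (xk1 - yk) <= lam ^+ 2 * N (gw - gy) + N (yk - xk1).
  have := dotp_ge0 (lam *: (gw - gy) - (xk1 - yk)).
  have -> : N (lam *: (gw - gy) - (xk1 - yk)) = lam ^+ 2 * N (gw - gy) + N (yk - xk1)
     - 2 * lam * dotp (gw - gy) (xk1 - yk) by dring.
  lra.
have hB : N (gw - gy) <= L ^+ 2 * N (w - yk).
  have e1 : enorm (w' - yk) <= enorm (w - yk).
    apply: sq_le_enorm; exact: proj_nonexp cO hw (XO _ Xy).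
  have ODw' := OD _ Ow'; have ODy := OD _ (XO _ Xy).
  case: ODw' => DFw' DHw'; case: ODy => DFy DHy.
  have e2 : enorm (gw - gy) <= L * enorm (w - yk).
    have -> : gw - gy = (F w' - F yk) + eta *: (H w' - H yk).
      by apply/matrixP => i j; rewrite !mxE; ring.
    apply: le_trans (enorm_triangle _ _) _.
    rewrite enormZ; last exact: ltW.
    have := lipF _ _ DFw' DFy; have := lipH _ _ DHw' DHy.
    move=> h1 h2.
    have h3 := ler_wpM2l LF0 e1.
    have h4 := ler_wpM2l (mulr_ge0 (ltW eta0) LH0) e1.
    have h5 := ler_wpM2l (ltW eta0) h1.
    rewrite /L; lra.
  rewrite -!enorm_sq; have := enorm_ge0 (gw - gy); nra.
have hC : eta * mu * N (yk - x) + eta * dotp (H x) (yk - x) <= dotp gy (yk - x).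
  have := monF _ _ (OD _ (XO _ Xy)).1 (OD _ (XO _ Xx)).1.
  have := smH _ _ (OD _ (XO _ Xy)).2 (OD _ (XO _ Xx)).2.
  have := solx _ Xy.
  have -> : dotp gy (yk - x) = dotp (F yk) (yk - x) + eta * dotp (H yk) (yk - x) by dring.
  have -> : dotp (F yk - F x) (yk - x) = dotp (F yk) (yk - x) - dotp (F x) (yk - x) by dring.
  have -> : dotp (H yk - H x) (yk - x) = dotp (H yk) (yk - x) - dotp (H x) (yk - x) by dring.
  rewrite enorm_sq => h1 h2 h3.
  have h4 := ler_wpM2l (ltW eta0) h2.
  rewrite mulrA mulrBr in h4; lra.
set c1 := 1 - lam ^+ 2 * L ^+ 2; set c2 := 2 * lam * eta * mu.
have c1p : 0 < c1.
  rewrite /c1 -exprMn; have := mulr_ge0 (ltW lam0) L0; move: lamL; rewrite -/L.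
  move: (lam * L) => t; nra.
have c2p : 0 < c2 by rewrite /c2 !mulr_gt0.
have hE := comb_ineq _ _ (w - yk) (yk - x) c1p c2p.
have ee : w - yk + (yk - x) = w - x by rewrite addrA subrK.
rewrite ee in hE.
set be := (c1^-1 + c2^-1)^-1 in hE *.
have := dotp_ge0 (yk - xk1).
move: VI1 VI2 iden hA hB hC hE; rewrite -/gw -/gy /c1 /c2.
move=> v1 v2 id hA hB hC hE h0.
have hB' := ler_wpM2l (sqr_ge0 lam) hB.
have hC' := ler_wpM2l (mulr_ge0 (ler0n _ 2) (ltW lam0)) hC.
rewrite id; move: hB' hC' hA hE v1 v2 h0.
rewrite !mulrDr !mulrA.
lra.
Qed.
End S3.

Section S4.
Context {R : realType}.
Variables (beta alpha : nat -> R).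
Hypothesis hbeta : forall j, 0 < beta j < 1.
Hypothesis halpha : forall j, 0 <= alpha j.
Hypothesis halpha0 : alpha 0%N <= 1.
Hypothesis halphaS : forall j, alpha j.+1 <= (1 - beta j) * alpha j.

Definition PP (m : nat) : R := (\prod_(i < m) (1 - beta i))^-1.

Lemma prod_pos m : 0 < \prod_(i < m) (1 - beta i).
Proof. apply: prodr_gt0 => i _; have := hbeta i; lra. Qed.

Lemma prod_le1 m : \prod_(i < m) (1 - beta i) <= 1.
Proof.
elim: m => [|m IH]; first by rewrite big_ord0.
rewrite big_ord_recr /=; have := hbeta m; have := prod_pos m; nra.
Qed.

Lemma PP_ge1 m : 1 <= PP m.
Proof. by rewrite /PP invf_ge1 ?prod_pos ?prod_le1. Qed.

Lemma PP_pos m : 0 < PP m.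
Proof. have := PP_ge1 m; lra. Qed.

Lemma PP0 : PP 0 = 1.
Proof. by rewrite /PP big_ord0 invr1. Qed.

Lemma PPS m : PP m.+1 * (1 - beta m) = PP m.
Proof.
rewrite /PP big_ord_recr /= invfM mulfVK //.
by have := hbeta m; rewrite subr_eq0; move=> hb; apply/eqP => e; move: hb; rewrite -e; lra.
Qed.

Lemma s_decr m : PP m.+1 * alpha m.+1 <= PP m * alpha m.
Proof.
rewrite -(PPS m) -mulrA; apply: ler_wpM2l; first exact: ltW (PP_pos _).
exact: halphaS.
Qed.

Lemma s_le1 m : PP m * alpha m <= 1.
Proof.
elim: m => [|m IH]; first by rewrite PP0 mul1r.
exact: le_trans (s_decr m) IH.
Qed.

Lemma alpha_le1 m : alpha m <= 1.
Proof.
have := s_le1 m; have := PP_ge1 m; have := halpha m; nra.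
Qed.

Lemma sum_bound (c h u d up : nat -> R) (D2 : R) :
  (forall j, 0 <= u j <= D2) -> (forall j, 0 <= d j <= D2) ->
  up 0%N = u 0%N -> (forall j, up j.+1 = u j) ->
  (forall j, u j.+1 <= (1 - beta j) * (u j + alpha j * (u j - up j)
                         + (alpha j + alpha j ^+ 2) * d j) - 2 * c j * h j) ->
  forall m, 2 * \sum_(j < m) c j * PP j.+1 * h j <= (2 * m%:R + 1) * D2.
Proof.
move=> hu hd hup0 hupS hstep.
have hupb : forall j, 0 <= up j <= D2 by case=> [|j]; rewrite ?hup0 ?hupS.
have claim : forall m, 2 * \sum_(j < m) c j * PP j.+1 * h j + PP m * u m
    - PP m * alpha m * up m + PP m * alpha m * D2 <= (2 * m%:R + 1) * D2.
  elim=> [|m IH].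
    rewrite big_ord0 PP0 mulr0 add0r !mul1r hup0 add0r mul1r.
    have := hu 0%N; have := halpha 0%N; have := halpha0; nra.
  rewrite big_ord_recr /= hupS.
  have st := ler_wpM2l (ltW (PP_pos m.+1)) (hstep m).
  rewrite mulrBr mulrA PPS in st.
  have sd := s_decr m; have s1 := s_le1 m; have a1 := alpha_le1 m.
  have a0 := halpha m; have a0' := halpha m.+1.
  have P0 := PP_pos m; have P1 := PP_pos m.+1.
  have [u0 u1] := andP (hu m); have [d0 d1] := andP (hd m).
  have [up0 up1] := andP (hupb m).
  move: IH st sd s1.
  set S := \sum_(j < m) _.
  set s0 := PP m * alpha m; set s' := PP m.+1 * alpha m.+1.
  rewrite -!/s0 => IH st sd s1.
  have f1 : 0 <= (s0 - s') * (D2 - u m) by apply: mulr_ge0; lra.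
  have s0p : 0 <= s0 by apply: mulr_ge0 => //; exact: ltW.
  have f2 : 0 <= s0 * (1 + alpha m) * (D2 - d m).
    apply: mulr_ge0; [apply: mulr_ge0|]; lra.
  have f3 : s0 * (1 + alpha m) <= 2 by nra.
  have f4 : 0 <= (2 - s0 * (1 + alpha m)) * D2 by apply: mulr_ge0; lra.
  rewrite -natr1.
  have e1 : PP m * (u m + alpha m * (u m - up m) + (alpha m + alpha m ^+ 2) * d m)
     = PP m * u m + s0 * u m - s0 * up m + s0 * (1 + alpha m) * d m by rewrite /s0; ring.
  rewrite e1 in st.
  move: IH st f1 f2 f4.
  rewrite -/s'.
  nra.
move=> m; have := claim m.
have := PP_pos m; have [u0 _] := andP (hu m); have [_ up1] := andP (hupb m).
have s1 := s_le1 m; have s0 : 0 <= PP m * alpha m by apply: mulr_ge0; [apply: ltW; exact: PP_pos|].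
have f : PP m * alpha m * up m <= PP m * alpha m * D2 by apply: ler_wpM2l.
have f' : 0 <= PP m * u m by apply: mulr_ge0; [apply: ltW; exact: PP_pos|].
lra.
Qed.
End S4.

Section S5.
Context {R : realType} {n : nat}.
Notation vec := 'rV[R]_n.
Local Notation N u := (dotp u u).

Lemma coord_le_norm (u : vec) i : `|u 0 i| <= `|u|.
Proof.
have -> : `|u| = mx_norm u by [].
rewrite mx_normrE.
apply: le_trans (le_bigmax _ _ (0, i)) => //=.
Qed.

Lemma N_le_norm (u : vec) : N u <= n%:R * `|u| ^+ 2.
Proof.
rewrite /dotp.
apply: le_trans (_ : \sum_(i < n) `|u| ^+ 2 <= _).
  apply: ler_sum => i _; rewrite -expr2 -real_normK ?num_real //.
  by rewrite lerXn2r ?nnegrE ?normr_ge0 // coord_le_norm.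
by rewrite sumr_const card_ord mulr_natl.
Qed.

Lemma enorm_le1N (u : vec) : enorm u <= 1 + N u.
Proof.
apply: enorm_le_of_sq; first by have := dotp_ge0 u; lra.
have := dotp_ge0 u; nra.
Qed.

Lemma compact_enorm_bounded (X : set vec) : compact X ->
  exists M, forall u v, X u -> X v -> enorm (u - v) <= M.
Proof.
move=> /compact_bounded [M0 [_ hM]].
have hM1 := hM (`|M0| + 1) (le_lt_trans (ler_norm _) (ltr_pwDr ltr01 (lexx _))).
set M := `|M0| + 1 in hM1.
exists (1 + n%:R * (M + M) ^+ 2) => u v Xu Xv.
apply: le_trans (enorm_le1N _) _; rewrite lerD2l.
apply: le_trans (N_le_norm _) _; apply: ler_wpM2l => //.
have h1 := hM1 u Xu; have h2 := hM1 v Xv; simpl in h1, h2.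
have h3 := ler_normB u v.
have := normr_ge0 (u - v); nra.
Qed.
End S5.


Section S6.
Context {R : realType} {n : nat}.
Notation vec := 'rV[R]_n.
Local Notation N u := (dotp u u).

Lemma dotpZr (u v : vec) (a : R) : dotp u (a *: v) = a * dotp u v.
Proof. dring. Qed.

Lemma dotp_sum (u : vec) (m : nat) (b : nat -> R) (v : nat -> vec) :
  dotp u (\sum_(j < m) b j *: v j) = \sum_(j < m) b j * dotp u (v j).
Proof.
elim: m => [|m IH].
  rewrite !big_ord0; apply: big1 => i _; rewrite mxE mulr0 //.
rewrite !big_ord_recr /= -IH.
dring.
Qed.
End S6.


Theorem corollary4p16 (R : realType) (n : nat)
  (F H : 'rV[R]_n -> 'rV[R]_n) (DomF DomH X Omega : set 'rV[R]_n)
  (LF LH mu eta lamlo lamhi eps : R)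
  (alpha lam : nat -> R) (x w w' y : nat -> 'rV[R]_n) (k : nat) :
  (* standing assumptions *)
  0 < LF -> 0 < LH ->
  monotoneRn DomF F -> lipschitzRn DomF F LF ->
  monotoneRn DomH H -> lipschitzRn DomH H LH ->
  X !=set0 -> compact X -> convex_setRn X ->
  Omega !=set0 -> closed Omega -> convex_setRn Omega ->
  X `<=` Omega -> Omega `<=` DomF `&` DomH ->
  VIsol F X !=set0 ->
  (forall j, 0 <= alpha j) ->
  IneIREG F H X Omega alpha lam (fun _ => eta) x w w' y ->
  (* hypotheses of the corollary *)
  0 < mu -> strongly_monotoneRn DomH H mu ->
  0 < eta ->
  let L := LF + eta * LH in
  0 < lamlo -> lamlo <= lamhi -> lamhi < 1 / L ->
  (forall j, lamlo <= lam j <= lamhi) ->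
  let beta := fun j => ((1 - lam j ^+ 2 * L ^+ 2)^-1 + (2 * lam j * eta * mu)^-1)^-1 in
  0 <= alpha 0%N <= 1 ->
  (forall j, alpha j.+1 <= (1 - beta j) * alpha j) ->
  let p := fun j : nat => (\prod_(i < j.+1) (1 - beta i))^-1 in
  let Lam := fun m : nat => \sum_(j < m) lam j * eta * p j in
  let ybar := fun m : nat => (Lam m)^-1 *: \sum_(j < m) (lam j * eta * p j) *: y j in
  0 < eps -> (1 <= k)%N ->
  Num.ceil (((1 - lamhi ^+ 2 * L ^+ 2)^-1 + (2 * lamlo * eta * mu)^-1) *
            ln ((k.+1)%:R * diamRn X ^+ 2 / (lamlo * eta * eps))) <= k%:Z ->
  - supnorm H (VIsol F X) * distRn (ybar k) (VIsol F X) <= Gap (ybar k) H (VIsol F X)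
  /\ Gap (ybar k) H (VIsol F X) <= eps.
Proof.
move=> LF0 LH0 monF lipF monH lipH [x00 Xx00] cX convX.
move=> [oo Ooo] clO convO XO OD [xs Qxs].
move=> alpha0 [Xx0 hIt] mu0 smH eta0 L lam0 lamlohi lamhiL lamb beta a01 halS p Lam ybar
  eps0 k1 hceil.
set Q := VIsol F X.
set D := diamRn X.
have [M hM] := compact_enorm_bounded X cX.
have hD : forall u v, X u -> X v -> enorm (u - v) <= D.
  move=> u v Xu Xv; apply: sup_upper_bound; last by exists u; exists v.
  split; first by exists (enorm (u - v)); exists u; exists v.
  by exists M => r [a [b [Xa [Xb ->]]]]; apply: hM.
have D0 : 0 <= D by apply: le_trans (hD _ _ Xx00 Xx00); apply: enorm_ge0.
have hD2 : forall u v, X u -> X v -> dotp (u - v) (u - v) <= D ^+ 2.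
  move=> u v Xu Xv; rewrite -enorm_sq; have := hD _ _ Xu Xv; have := enorm_ge0 (u - v); nra.
have Qs : Q `<=` X by move=> z [].
have Xxj : forall j, X (x j) by case=> [|j] //; have [_ [_ [_ [h _]]]] := hIt j.
have Xyj : forall j, X (y j) by move=> j; have [_ [_ [[h _] _]]] := hIt j.
have Xxp : forall j, X (xprev x j) by case=> [|j] /=.
have QH : forall z, Q z -> DomH z by move=> z qz; exact: (OD _ (XO _ (Qs _ qz))).2.
have hHb : forall z, Q z -> enorm (H z) <= enorm (H xs) + LH * D.
  move=> z qz; have -> : H z = H xs + (H z - H xs) by rewrite addrC subrK.
  apply: le_trans (enorm_triangle _ _) _; rewrite lerD2l.
  apply: le_trans (lipH _ _ (QH _ qz) (QH _ Qxs)) _; apply: ler_wpM2l; first exact: ltW.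
  by apply: hD; apply: Qs.
have supB : has_sup [set r | exists x0, Q x0 /\ r = enorm (H x0)].
  split; first by exists (enorm (H xs)); exists xs.
  by exists (enorm (H xs) + LH * D) => r [z [qz ->]]; exact: hHb.
set B := supnorm H Q.
have hB : forall z, Q z -> enorm (H z) <= B.
  by move=> z qz; apply: (sup_upper_bound supB); exists z.
have B0 : 0 <= B by apply: le_trans (enorm_ge0 _) (hB _ Qxs).
set z := ybar k.
have supG : has_sup [set r | exists x0, Q x0 /\ r = dotp (H x0) (z - x0)].
  split; first by exists (dotp (H xs) (z - xs)); exists xs.
  exists ((enorm (H xs) + LH * D) * (enorm (z - xs) + D)) => r [x1 [q1 ->]].
  apply: le_trans (CS3 _ _) _.
  apply: ler_pM; [exact: enorm_ge0|exact: enorm_ge0|exact: hHb|].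
  have -> : z - x1 = (z - xs) + (xs - x1) by rewrite addrA subrK.
  by apply: le_trans (enorm_triangle _ _) _; rewrite lerD2l; apply: hD; apply: Qs.
have hG : forall x1, Q x1 -> dotp (H x1) (z - x1) <= Gap z H Q.
  by move=> x1 q1; apply: (sup_upper_bound supG); exists x1.
have hG' : forall x1, Q x1 -> - (B * enorm (z - x1)) <= Gap z H Q.
  move=> x1 q1; apply: le_trans (hG _ q1); apply: le_trans (CS4 _ _).
  by rewrite lerN2; apply: ler_wpM2r; [exact: enorm_ge0| exact: hB].
split.
  have [B0'|Bpos] := eqVneq B 0.
    by rewrite B0' oppr0 mul0r; have := hG' _ Qxs; rewrite B0' mul0r oppr0.
  have Bp : 0 < B by rewrite lt0r Bpos.
  have : - Gap z H Q / B <= distRn z Q.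
    apply: lb_le_inf; first by exists (enorm (z - xs)); exists xs.
    move=> r [x1 [q1 ->]]; rewrite ler_pdivrMr //; have := hG' _ q1; rewrite mulrC; lra.
  rewrite ler_pdivrMr // mulrC mulNr; lra.
have Lpos : 0 < L by rewrite /L addr_gt0 // mulr_gt0.
have lamhiL' : lamhi * L < 1 by move: lamhiL; rewrite ltr_pdivlMr.
have lamj0 : forall j, 0 < lam j by move=> j; have := lamb j; lra.
have lamL : forall j, lam j * (LF + eta * LH) < 1.
  move=> j; rewrite -/L; apply: le_lt_trans lamhiL'; apply: ler_wpM2r; first exact: ltW.
  by have := lamb j; case/andP.
have A0 : 0 < 1 - lamhi ^+ 2 * L ^+ 2.
  rewrite -exprMn; have := mulr_ge0 (ltW (lt_le_trans lam0 lamlohi)) (ltW Lpos).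
  move: lamhiL'; move: (lamhi * L) => t; nra.
set T := (1 - lamhi ^+ 2 * L ^+ 2)^-1 + (2 * lamlo * eta * mu)^-1.
have Tpos : 0 < T by rewrite /T addr_gt0 ?invr_gt0 // !mulr_gt0.
have hbeta : forall j, 0 < beta j < 1 /\ T^-1 <= beta j.
  move=> j; rewrite /beta.
  have [l1 l2] := andP (lamb j).
  have a0 : 0 < 1 - lam j ^+ 2 * L ^+ 2.
    rewrite -exprMn; have := mulr_ge0 (ltW (lamj0 j)) (ltW Lpos).
    have := lamL j; rewrite -/L; move: (lam j * L) => t; nra.
  have a1 : 1 - lam j ^+ 2 * L ^+ 2 <= 1 by have := sqr_ge0 (lam j); have := sqr_ge0 L; nra.
  have aA : 1 - lamhi ^+ 2 * L ^+ 2 <= 1 - lam j ^+ 2 * L ^+ 2.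
    have := lamj0 j; have := sqr_ge0 L; rewrite lerD2l lerN2; move=> h1 h2.
    apply: ler_wpM2r => //; rewrite lerXn2r ?nnegrE //; lra.
  have b0 : 0 < 2 * lam j * eta * mu by rewrite !mulr_gt0.
  have bB : 2 * lamlo * eta * mu <= 2 * lam j * eta * mu.
    by rewrite !ler_wpM2r ?ler_wpM2l //; lra.
  have ia : 1 <= (1 - lam j ^+ 2 * L ^+ 2)^-1 by rewrite invf_ge1.
  have ib : 0 < (2 * lam j * eta * mu)^-1 by rewrite invr_gt0.
  have s0 : 0 < (1 - lam j ^+ 2 * L ^+ 2)^-1 + (2 * lam j * eta * mu)^-1 by lra.
  split; first (apply/andP; split; first by rewrite invr_gt0).
    by rewrite invf_lt1 //; lra.
  rewrite lef_pV2 ?posrE // /T; apply: lerD.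
    by rewrite lef_pV2 ?posrE.
  by rewrite lef_pV2 ?posrE // !mulr_gt0.
have hbeta1 : forall j, 0 < beta j < 1 by move=> j; case: (hbeta j).
have a0le1 : alpha 0%N <= 1 by case/andP: a01.
have PPe : forall j, p j = PP beta j.+1 by [].
have PPpos : forall m, 0 < PP beta m by move=> m; exact: PP_pos hbeta1 m.
have PPexp : forall m, expR (m%:R * T^-1) <= PP beta m.
  elim=> [|m IH]; first by rewrite mul0r expR0 (PP0 beta).
  rewrite -natr1 mulrDl mul1r expRD.
  have e1 : PP beta m.+1 * (1 - beta m) = PP beta m by apply: PPS.
  have e2 : expR (T^-1) * (1 - beta m) <= 1.
    have := expR_ge1Dx (- T^-1); rewrite expRN => h.
    have ep := expR_gt0 (T^-1).
    have [_ hb] := hbeta m.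
    have : 1 - beta m <= (expR T^-1)^-1 by lra.
    by rewrite -(ler_pM2l ep) mulfV ?gt_eqF.
  have := PPpos m.+1; have := expR_gt0 (m%:R * T^-1); have := expR_gt0 (T^-1).
  move: IH e1 e2; nra.
have Lampos : 0 < Lam k /\ lamlo * eta * PP beta k <= Lam k.
  have ek : k = k.-1.+1 by rewrite prednK.
  rewrite ek; set k' := k.-1.
  rewrite /Lam big_ord_recr /=.
  have S0 : 0 <= \sum_(i < k') lam i * eta * p i.
    apply: sumr_ge0 => i _; apply: mulr_ge0; last exact: ltW (PPpos _).
    by apply: mulr_ge0; apply: ltW.
  have := PPpos k'.+1; rewrite -PPe => pp.
  have [l1 _] := andP (lamb k').
  have : lamlo * eta * p k' <= lam k' * eta * p k'.
    by rewrite ler_wpM2r ?ler_wpM2r //; apply: ltW.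
  have := mulr_gt0 (mulr_gt0 lam0 eta0) pp.
  rewrite PPe; lra.
have keyL : (k.+1)%:R * D ^+ 2 <= eps * Lam k.
  rewrite -/D in hceil.
  set Ar := k.+1%:R * D ^+ 2 / (lamlo * eta * eps) in hceil.
  have den0 : 0 < lamlo * eta * eps by rewrite !mulr_gt0.
  have eAr : k.+1%:R * D ^+ 2 = Ar * (lamlo * eta * eps) by rewrite /Ar mulfVK ?gt_eqF.
  have hk : T * ln Ar <= k%:R.
    have := ceil_ge (T * ln Ar); have := hceil; rewrite -(ler_int R) pmulrn => h1 h2.
    exact: le_trans h2 h1.
  have [Ll Lpp] := Lampos.
  have [Arp|Arn] := ltP 0 Ar.
    have h3 : ln Ar <= k%:R * T^-1.
      have -> : ln Ar = T^-1 * (T * ln Ar) by rewrite mulrA mulVf ?gt_eqF ?mul1r.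
      by rewrite mulrC; apply: ler_wpM2r => //; rewrite invr_ge0 ltW.
    have h4 : Ar <= PP beta k.
      apply: le_trans (PPexp k); rewrite -[X in X <= _]lnK ?posrE // ler_expR //.
    rewrite eAr; have := PPpos k; nra.
  have D2 : 0 <= D ^+ 2 by apply: sqr_ge0.
  have : k.+1%:R * D ^+ 2 <= 0 by rewrite eAr; nra.
  have := mulr_gt0 eps0 Ll; lra.
apply: ge_sup; first by exists (dotp (H xs) (z - xs)); exists xs.
move=> r [x1 [q1 ->]].
have Xx1 := Qs _ q1.
have hstep : forall j, dotp (x j.+1 - x1) (x j.+1 - x1) <= (1 - beta j) *
   (dotp (x j - x1) (x j - x1) + alpha j * (dotp (x j - x1) (x j - x1)
     - dotp (xprev x j - x1) (xprev x j - x1))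
    + (alpha j + alpha j ^+ 2) * dotp (x j - xprev x j) (x j - xprev x j))
   - 2 * (lam j * eta) * dotp (H x1) (y j - x1).
  move=> j; have [hwj [hpw [hpy hpx]]] := hIt j.
  have E := @eg_step R n X Omega DomF DomH F H LF LH eta mu (lam j) (w j) (w' j) (y j) (x j.+1) x1
    convX convO XO OD monF lipF smH lipH (ltW LF0) (ltW LH0) eta0 mu0 (lamj0 j) (lamL j) hpw hpy hpx q1.
  have eN : dotp (w j - x1) (w j - x1) = dotp (x j - x1) (x j - x1) + alpha j * (dotp (x j - x1) (x j - x1)
     - dotp (xprev x j - x1) (xprev x j - x1))
    + (alpha j + alpha j ^+ 2) * dotp (x j - xprev x j) (x j - xprev x j).
    by rewrite hwj; dring.
  by apply: le_trans E _; rewrite eN mulrA; exact: lexx.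
have SB : 2 * \sum_(j < k) (lam j * eta) * PP beta j.+1 * dotp (H x1) (y j - x1)
    <= (2 * k%:R + 1) * D ^+ 2.
  apply: (@sum_bound R beta alpha hbeta1 alpha0 a0le1 halS (fun j => lam j * eta)
    (fun j => dotp (H x1) (y j - x1)) (fun j => dotp (x j - x1) (x j - x1))
    (fun j => dotp (x j - xprev x j) (x j - xprev x j))
    (fun j => dotp (xprev x j - x1) (xprev x j - x1)) (D ^+ 2)) => //.
  - by move=> j; rewrite dotp_ge0 hD2.
  - by move=> j; rewrite dotp_ge0 hD2.
have SB' : 2 * \sum_(j < k) (lam j * eta * p j) * dotp (H x1) (y j - x1)
    <= (2 * k%:R + 1) * D ^+ 2 := SB.
have eS : \sum_(j < k) (lam j * eta * p j) *: (y j - x1)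
    = \sum_(j < k) (lam j * eta * p j) *: y j - Lam k *: x1.
  by rewrite /Lam scaler_suml -sumrB; apply: eq_bigr => j _; rewrite scalerBr.
have [Ll _] := Lampos.
have ez : z - x1 = (Lam k)^-1 *: \sum_(j < k) (lam j * eta * p j) *: (y j - x1).
  by rewrite eS scalerBr scalerA mulVf ?gt_eqF // scale1r.
rewrite ez dotpZr (dotp_sum _ _ (fun j => lam j * eta * p j) (fun j => y j - x1)) /= mulrC ler_pdivrMr //.
move: SB' keyL; rewrite -natr1; have := sqr_ge0 D; lra.
Qed.
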